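(* Let $(G,\sigma)$ be a planar, color-connected colored graph with a fixed plane embedding and vertices $s,t$ connected in $G$. If $S$ is an inclusion-minimal $s$-$t$ color separator, then the vertices of the color-intersection graph $\mathcal{G}$ corresponding to the colors in $S$ induce a connected subgraph of $\mathcal{G}$.
   Context: $\sigma:V\to 2^{[m]}$; color-connected means for each color $c$ the vertices whose color set contains $c$ induce a connected subgraph. $V(C)=\{v:\sigma(v)\cap C\ne\emptyset\}$; $S\subseteq[m]$ is an $s$-$t$ color separator if $s,t$ are disconnected in $G-V(S)$. For a face $f$ of $G$, $\sigma(f)$ is the union of $\sigma(u)\cup\sigma(v)$ over boundary edges $uv$ of $f$. The color-intersection graph $\mathcal{G}$ has a vertex $c_i$ per color $i\in[m]$ and an edge $c_ic_j$ whenever some face $f$ satisfies $\{i,j\}\subseteq\sigma(f)$. *)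

(* Defs.v *)
From mathcomp Require Import all_boot.
Set Implicit Arguments. Unset Strict Implicit. Unset Printing Implicit Defensive.

(* Plane graphs as combinatorial maps (rotation systems) of genus 0.
   V : vertices, D : darts (half-edges).
   tl d    : the vertex at which dart d starts,
   alpha d : the opposite dart of the same edge (fixed-point-free involution),
   rot d   : the next dart counter-clockwise around the vertex tl d. *)
Section PlaneMap.
Variables (V D : finType) (tl : D -> V) (alpha rot : D -> D).

(* face permutation: facial walks are the orbits of phi *)
Definition phi (d : D) : D := rot (alpha d).

Definition map_rel : rel D := fun d e => (e == alpha d) || (e == rot d).

Definition used_vertices : {set V} := [set tl d | d : D].

Definition plane_map : Prop :=
  (involutive alpha) /\
  (forall d, alpha d != d) /\
  (injective rot) /\
  (forall d, tl (rot d) = tl d) /\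
  (forall d e, tl d = tl e -> fconnect rot d e) /\
      (* simple graph: no loops, no parallel edges *)
  (forall d, tl (alpha d) != tl d) /\
  (forall d e, tl d = tl e -> tl (alpha d) = tl (alpha e) -> d = e) /\
      (* genus 0 (Euler's formula on every component):
         sum over components of (V_i - E_i + F_i) = 2 * #components,
         with E = #|D|/2, written without division *)
  (2 * (#|used_vertices| + fcard phi (mem D)) = #|D| + 4 * n_comp map_rel (mem D)).

Definition adj : rel V := fun u v => [exists d, (tl d == u) && (tl (alpha d) == v)].

End PlaneMap.

Definition induced_rel (T : finType) (e : rel T) (A : {set T}) : rel T :=
  fun x y => [&& x \in A, y \in A & e x y].

Definition induced_connected (T : finType) (e : rel T) (A : {set T}) : Prop :=
  forall x y, x \in A -> y \in A -> connect (induced_rel e A) x y.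

Section Colors.
Variables (V D : finType) (tl : D -> V) (alpha rot : D -> D) (m : nat)
          (sigma : V -> {set 'I_m}).

Definition color_class (c : 'I_m) : {set V} := [set v | c \in sigma v].

Definition color_connected : Prop :=
  forall c, induced_connected (adj tl alpha) (color_class c).

Definition VC (C : {set 'I_m}) : {set V} := [set v | ~~ [disjoint sigma v & C]].

(* s and t are disconnected in G - V(S)
   (in particular if s or t itself belongs to V(S)) *)
Definition color_separator (s t : V) (S : {set 'I_m}) : Prop :=
  ~ (s \notin VC S /\ t \notin VC S /\
     connect (induced_rel (adj tl alpha) (~: VC S)) s t).

Definition minimal_color_separator (s t : V) (S : {set 'I_m}) : Prop :=
  color_separator s t S /\ forall S' : {set 'I_m}, S' \proper S -> ~ color_separator s t S'.

(* sigma(f) for the face whose facial walk contains dart d *)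
Definition face_colors (d : D) : {set 'I_m} :=
  \bigcup_(e | fconnect (phi alpha rot) d e) (sigma (tl e) :|: sigma (tl (alpha e))).

Definition cig_adj : rel 'I_m :=
  fun i j => (i != j) && [exists d, (i \in face_colors d) && (j \in face_colors d)].

End Colors.

(* Main.v *)
Require Import Defs.
From mathcomp Require Import all_boot all_order all_algebra.
From mathcomp Require Import zify.
Set Implicit Arguments. Unset Strict Implicit. Unset Printing Implicit Defensive.
Import GRing.Theory.
Local Open Scope ring_scope.

Notation F2 := 'F_2.

Lemma F2cases (a : F2) : a = 0 \/ a = 1.
Proof. case: a => [[|[|k]] Hk] //; [left|right]; exact/val_inj. Qed.

Lemma F2_add_self (a : F2) : a + a = 0.
Proof. by case: (F2cases a) => ->; apply/val_inj. Qed.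

Lemma F2_nat n : (n%:R : F2) = (odd n)%:R.
Proof.
elim: n => // n IH; rewrite mulrS IH /=.
by case: (odd n); apply/val_inj.
Qed.

Lemma F2_oddE n : ((n%:R : F2) == 0) = ~~ odd n.
Proof. by rewrite F2_nat; case: (odd n). Qed.

Lemma F2_add_eq0 (a b : F2) : (a + b == 0) = (a == b).
Proof. by case: (F2cases a) => ->; case: (F2cases b) => ->. Qed.

Definition mx (T U : finType) (g : T -> U -> F2) : 'M[F2]_(#|T|, #|U|) :=
  \matrix_(i, j) g (enum_val i) (enum_val j).

Lemma sum_enum (T : finType) (G : 'I_#|T| -> F2) :
  \sum_i G i = \sum_t G (enum_rank t).
Proof. by rewrite (reindex enum_rank) //; apply: onW_bij; apply: enum_rank_bij. Qed.

Lemma mxE' (T U : finType) (g : T -> U -> F2) t u :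
  mx g (enum_rank t) (enum_rank u) = g t u.
Proof. by rewrite mxE !enum_rankK. Qed.

Lemma mulmx_mx (T U W : finType) (g1 : T -> U -> F2) (g2 : U -> W -> F2) :
  mx g1 *m mx g2 = mx (fun s w => \sum_u g1 s u * g2 u w).
Proof.
apply/matrixP => i j; rewrite !mxE sum_enum; apply: eq_bigr => u _.
by rewrite !mxE enum_rankK.
Qed.

Lemma vmulE (T U : finType) (v : 'rV[F2]_#|T|) (g : T -> U -> F2) u :
  (v *m mx g) 0 (enum_rank u) = \sum_t v 0 (enum_rank t) * g t u.
Proof. by rewrite !mxE sum_enum; apply: eq_bigr => t _; rewrite mxE' . Qed.

Lemma rv_eq0 (T : finType) (v : 'rV[F2]_#|T|) :
  (forall t, v 0 (enum_rank t) = 0) -> v = 0.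
Proof.
move=> H; apply/rowP => i; rewrite mxE -(enum_valK i); exact: H.
Qed.

Lemma trmx_mx (T U : finType) (g : T -> U -> F2) :
  (mx g)^T = mx (fun u t => g t u).
Proof. by apply/matrixP => i j; rewrite !mxE. Qed.

Lemma rank_inj_bound (T : finType) k (K : 'M[F2]_(k, #|T|)) (W : {set T}) :
  (forall v : 'rV[F2]_#|T|, (v <= K)%MS ->
      (forall t, t \in W -> v 0 (enum_rank t) = 0) -> v = 0) ->
  (\rank K <= #|W|)%N.
Proof.
move=> H.
pose Rt := mx (fun (t : T) (w : {x | x \in W}) => (t == val w)%:R).
have := mxrank_mul_ker K Rt.
have -> : (K :&: kermx Rt)%MS = 0.
  apply/eqP/rowV0P => v; rewrite sub_capmx => /andP[vK /sub_kermxP vR].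
  apply: H => // t tW.
  have := vmulE v (fun (t0 : T) (w : {x | x \in W}) => (t0 == val w)%:R : F2) (exist _ t tW).
  rewrite -/Rt vR mxE => /esym.
  rewrite (bigD1 t) //= eqxx mulr1 big1 ?addr0 // => t' /negbTE ->.
  by rewrite mulr0.
rewrite mxrank0 addn0 => <-.
apply: leq_trans (rank_leq_col _) _.
by rewrite card_sig.
Qed.

Lemma mx0 (T U : finType) (g : T -> U -> F2) :
  (forall t u, g t u = 0) -> mx g = 0.
Proof. by move=> H; apply/matrixP => i j; rewrite !mxE H. Qed.

Lemma sum_delta (T : finType) (f : T -> F2) u :
  \sum_t f t * (t == u)%:R = f u.
Proof.
rewrite (bigD1 u) //= eqxx mulr1 big1 ?addr0 // => t /negbTE ->.
by rewrite mulr0.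
Qed.

Lemma sum_delta' (T : finType) (f : T -> F2) u :
  \sum_t f t * (u == t)%:R = f u.
Proof. by rewrite -(sum_delta f u); apply: eq_bigr => t _; rewrite eq_sym. Qed.

Lemma sum_deltaL (T : finType) (f : T -> F2) u :
  \sum_t (u == t)%:R * f t = f u.
Proof. by rewrite -(sum_delta' f u); apply: eq_bigr => t _; rewrite mulrC. Qed.

Lemma F2_b (a : F2) : a = (a != 0)%:R.
Proof. by case: (F2cases a) => ->. Qed.

Lemma sum_F2_card (T : finType) (h : T -> F2) :
  \sum_t h t = (#|[set t | h t != 0]|)%:R.
Proof.
rewrite -sum1dep_card natr_sum [RHS]big_mkcond /=; apply: eq_bigr => t _.
by rewrite {1}(F2_b (h t)); case: (h t != 0).
Qed.

Definition vf (T : finType) (v : 'rV[F2]_#|T|) (t : T) := v 0 (enum_rank t).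

Definition rv (T : finType) (f : T -> F2) : 'rV[F2]_#|T| := \row_i f (enum_val i).

Lemma rvE (T : finType) (f : T -> F2) t : vf (rv f) t = f t.
Proof. by rewrite /vf mxE enum_rankK. Qed.

Lemma rvE' (T : finType) (f : T -> F2) t : (rv f) 0 (enum_rank t) = f t.
Proof. by rewrite mxE enum_rankK. Qed.

Lemma vfD (T : finType) (a b : 'rV[F2]_#|T|) t : vf (a + b) t = vf a t + vf b t.
Proof. by rewrite /vf mxE. Qed.

Section Graph.
Variables (V D : finType) (tl : D -> V) (alpha rot : D -> D).
Hypotheses (alphaK : involutive alpha) (alpha_fp : forall d, alpha d != d)
  (rot_inj : injective rot) (tl_rot : forall d, tl (rot d) = tl d).

Local Notation ph := (phi alpha rot).

Lemma alpha_inj : injective alpha. Proof. exact: inv_inj. Qed.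
Lemma phi_inj : injective ph.
Proof. by move=> x y; rewrite /phi => /rot_inj /alpha_inj. Qed.
Lemma tl_phi d : tl (ph d) = tl (alpha d). Proof. by rewrite /phi tl_rot. Qed.
Lemma rot_phi d : rot d = ph (alpha d). Proof. by rewrite /phi alphaK. Qed.

Lemma map_rel_sym : connect_sym (map_rel alpha rot).
Proof.
have step : forall x y, map_rel alpha rot x y -> connect (map_rel alpha rot) y x.
  move=> x y /orP[/eqP->|/eqP->].
    by apply: connect1; rewrite /map_rel alphaK eqxx.
  have : fconnect rot (rot x) x.
    by rewrite fconnect_sym // fconnect1.
  apply: connect_sub => a b /= /eqP <-; apply: connect1.
  by rewrite /map_rel eqxx orbT.
have H : forall x y, connect (map_rel alpha rot) x y -> connect (map_rel alpha rot) y x.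
  move=> x y /connectP[p]; elim: p x => [|z p IH] x /=; first by move=> _ ->.
  case/andP=> xz pz ey; apply: connect_trans (IH _ pz ey) (step _ _ xz).
by move=> x y; apply/idP/idP; apply: H.
Qed.

Definition PhiM := mx (fun t u : D => (t == u)%:R + (t == ph u)%:R : F2).
Definition TalM := mx (fun t u : D => (t == u)%:R + (t == alpha u)%:R : F2).
Definition MM := mx (fun (d : D) (x : V) => (tl d == x)%:R + (tl (alpha d) == x)%:R : F2).

Lemma kerPhiP v : (v <= kermx PhiM)%MS -> forall u, vf v (ph u) = vf v u.
Proof.
move=> /sub_kermxP H u.
have := vmulE v (fun t u : D => (t == u)%:R + (t == ph u)%:R : F2) u.
rewrite -/PhiM H mxE.
under eq_bigr => t _ do rewrite mulrDr.
rewrite big_split /= sum_delta sum_delta => /esym /eqP.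
by rewrite F2_add_eq0 => /eqP.
Qed.

Lemma kerTalP v : (v <= kermx TalM)%MS -> forall u, vf v (alpha u) = vf v u.
Proof.
move=> /sub_kermxP H u.
have := vmulE v (fun t u : D => (t == u)%:R + (t == alpha u)%:R : F2) u.
rewrite -/TalM H mxE.
under eq_bigr => t _ do rewrite mulrDr.
rewrite big_split /= sum_delta sum_delta => /esym /eqP.
by rewrite F2_add_eq0 => /eqP.
Qed.

Lemma kerMTP u : (u <= kermx MM^T)%MS -> forall d, vf u (tl (alpha d)) = vf u (tl d).
Proof.
move=> /sub_kermxP H d.
have := vmulE u (fun (x : V) (d : D) => (tl d == x)%:R + (tl (alpha d) == x)%:R : F2) d.
rewrite -trmx_mx -/MM H mxE.
under eq_bigr => t _ do rewrite mulrDr.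
rewrite big_split /= sum_delta' sum_delta' => /esym /eqP.
by rewrite F2_add_eq0 => /eqP.
Qed.

Lemma inv_sub_Z (g : D -> D) (A : 'M[F2]_#|D|) : injective g ->
  (forall d, tl (g d) = tl (alpha d)) ->
  (forall v, (v <= A)%MS -> forall u, vf v (g u) = vf v u) ->
  (A <= kermx MM)%MS.
Proof.
move=> ginj tlg Hinv; apply/row_subP => i.
have Hr := Hinv _ (row_sub i A).
apply/sub_kermxP/rv_eq0 => x.
rewrite vmulE; under eq_bigr => t _ do rewrite mulrDr.
rewrite big_split /=.
have -> : \sum_t vf (row i A) t * (tl (alpha t) == x)%:R =
          \sum_t vf (row i A) t * (tl t == x)%:R.
  rewrite [RHS](reindex_inj ginj) /=; apply: eq_bigr => t _.
  by rewrite Hr tlg.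
exact: F2_add_self.
Qed.

Lemma Fs_sub_Z : (kermx PhiM <= kermx MM)%MS.
Proof. apply: (inv_sub_Z phi_inj tl_phi); exact: kerPhiP. Qed.

Lemma Ss_sub_Z : (kermx TalM <= kermx MM)%MS.
Proof. apply: (inv_sub_Z alpha_inj (fun _ => erefl)); exact: kerTalP. Qed.

Lemma alpha_eq s u : (s == alpha u) = (alpha s == u).
Proof. by apply/eqP/eqP; [move->|move<-]; rewrite alphaK. Qed.

Lemma TalM_sub : (TalM <= kermx TalM)%MS.
Proof.
apply/sub_kermxP; rewrite /TalM mulmx_mx; apply: mx0 => s w.
under eq_bigr => u _ do rewrite mulrDl.
rewrite big_split /= sum_deltaL.
under eq_bigr => u _ do rewrite [s == alpha u]alpha_eq.
rewrite sum_deltaL.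
have E1 : (alpha s == alpha w) = (s == w) by rewrite (inj_eq alpha_inj).
rewrite E1 -alpha_eq.
by case: (s == w); case: (s == alpha w); apply/val_inj.
Qed.

Definition Wc := [set r | roots (map_rel alpha rot) r].
Definition Wf := [set r | froots ph r].

Lemma phi_sym : connect_sym (frel ph).
Proof. exact: fconnect_sym phi_inj. Qed.

Lemma map_rel_inv (f : D -> F2) : (forall d, f (alpha d) = f d) ->
  (forall d, f (rot d) = f d) ->
  forall d e, connect (map_rel alpha rot) d e -> f e = f d.
Proof.
move=> fa fr d e /connectP[p]; elim: p d => [|z p IH] d /=; first by move=> _ ->.
case/andP=> /orP[/eqP->|/eqP->] pz ey; rewrite (IH _ pz ey) //.
Qed.

Lemma cap_bound : (\rank (kermx PhiM :&: kermx TalM) <= #|Wc|)%N.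
Proof.
apply: rank_inj_bound => v; rewrite sub_capmx => /andP[h1 h2] H0.
apply: rv_eq0 => d.
have fr : forall d, vf v (rot d) = vf v d.
  by move=> x; rewrite rot_phi (kerPhiP h1) (kerTalP h2).
have := map_rel_inv (kerTalP h2) fr (connect_root _ d).
rewrite /vf => <-; apply: H0.
by rewrite inE; apply: roots_root; apply: map_rel_sym.
Qed.

Lemma roots_phi_eq (r r' : D) : froots ph r -> froots ph r' ->
  fconnect ph r r' = (r == r').
Proof.
move=> /eqP hr /eqP hr'; rewrite -(root_connect phi_sym) hr hr' //.
Qed.

Lemma F_bound : (#|Wf| <= \rank (kermx PhiM))%N.
Proof.
pose R := mx (fun (r : {x | x \in Wf}) (d : D) => (fconnect ph (val r) d)%:R : F2).
pose Rt := mx (fun (d : D) (r : {x | x \in Wf}) => (d == val r)%:R : F2).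
have RP : (R <= kermx PhiM)%MS.
  apply/sub_kermxP; rewrite /R /PhiM mulmx_mx; apply: mx0 => r u.
  under eq_bigr => t _ do rewrite mulrDr.
  rewrite big_split /= !sum_delta -(same_fconnect1_r phi_inj).
  exact: F2_add_self.
have RR : R *m Rt = 1%:M.
  rewrite /R /Rt mulmx_mx; apply/matrixP => i j; rewrite !mxE sum_delta.
  have hi := valP (enum_val i); have hj := valP (enum_val j).
  rewrite inE in hi; rewrite inE in hj.
  rewrite roots_phi_eq ?hi ?hj //.
  have E : (\val (enum_val i) == \val (enum_val j)) = (i == j).
    by apply/idP/idP => /eqP H; apply/eqP; [apply: enum_val_inj; apply: val_inj | rewrite H].
  by rewrite E.
apply: leq_trans (mxrankS RP).
apply: leq_trans (mxrankM_maxl R Rt).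
by rewrite RR mxrank1 card_sig.
Qed.

Lemma V_bound : (\rank (kermx MM^T) <= #|~: used_vertices tl| + #|Wc|)%N.
Proof.
apply: leq_trans (_ : #|~: used_vertices tl :|: tl @: Wc| <= _)%N; last first.
  rewrite cardsU; apply: leq_trans (leq_subr _ _) _.
  by rewrite leq_add2l leq_imset_card.
apply: rank_inj_bound => u hu H0; apply: rv_eq0 => x.
case: (boolP (x \in used_vertices tl)) => hx; last first.
  by apply: H0; rewrite !inE hx.
case/imsetP: hx => d _ ->.
have := map_rel_inv (f := fun d => vf u (tl d)) (kerMTP hu)
   (fun d => congr1 _ (tl_rot d)) (connect_root _ d).
rewrite /vf /= => <-; apply: H0; rewrite inE; apply/orP; right.
by apply: imset_f; rewrite inE; apply: roots_root; apply: map_rel_sym.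
Qed.

Lemma Z_sub :
  (2 * (#|used_vertices tl| + fcard ph (mem D)) = #|D| + 4 * n_comp (map_rel alpha rot) (mem D))%N ->
  (kermx MM <= kermx PhiM + kermx TalM)%MS.
Proof.
move=> Heul.
have eF : fcard ph (mem D) = #|Wf| by apply: eq_card => x; rewrite !inE andbT.
have eC : n_comp (map_rel alpha rot) (mem D) = #|Wc| by apply: eq_card => x; rewrite !inE andbT.
rewrite eF eC in Heul.
have sub : (kermx PhiM + kermx TalM <= kermx MM)%MS by rewrite addsmx_sub Fs_sub_Z Ss_sub_Z.
rewrite -(mxrank_leqif_sup sub).2 eqn_leq (mxrankS sub) /=.
have h1 : (\rank (kermx MM) = #|D| - \rank MM)%N := mxrank_ker MM.
have h2 : (\rank (kermx PhiM + kermx TalM) + \rank (kermx PhiM :&: kermx TalM) =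
   \rank (kermx PhiM) + \rank (kermx TalM))%N := mxrank_sum_cap (kermx PhiM) (kermx TalM).
have h3 := cap_bound.
have h4 := F_bound.
have h5 : (\rank (kermx TalM) = #|D| - \rank TalM)%N := mxrank_ker TalM.
have h6 := mxrankS TalM_sub.
have h7 : (\rank (kermx MM^T) = #|V| - \rank MM)%N by rewrite mxrank_ker mxrank_tr.
have h8 := V_bound.
have h9 := cardsC (used_vertices tl).
have h10 := rank_leq_row MM.
have h11 := rank_leq_col MM.
have h12 := rank_leq_row TalM.
have t1 : (#|used_vertices tl| <= \rank MM + #|Wc|)%N by lia.
have t2 : (#|D| <= 2 * \rank (kermx TalM))%N by lia.
have t3 : (#|Wf| + \rank (kermx TalM) <= \rank (kermx PhiM + kermx TalM) + #|Wc|)%N by lia.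
have t4 : (2 * #|used_vertices tl| + 2 * #|Wf| = #|D| + 4 * #|Wc|)%N by lia.
have t5 : (\rank (kermx MM) + \rank MM = #|D|)%N by lia.
suff H : (\rank (kermx MM) <= \rank (kermx PhiM + kermx TalM))%N by exact: H.
lia.
Qed.

Lemma even_alpha (P : {set D}) : (forall d, d \in P -> alpha d \in P) -> ~~ odd #|P|.
Proof.
have [n hn] : exists n, #|P| = n by exists #|P|.
elim/ltn_ind: n P hn => n IH P hn cl.
case: (set_0Vmem P) => [P0|[d dP]]; first by rewrite P0 cards0.
pose Q := P :\: [set d; alpha d].
have sub : [set d; alpha d] \subset P.
  by apply/subsetP => x; rewrite !inE => /orP[/eqP->|/eqP->] //; apply: cl.
have cQ : #|P| = (#|Q| + 2)%N.
  rewrite /Q cardsD (setIidPr sub) cards2 eq_sym alpha_fp.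
  have := subset_leq_card sub; rewrite cards2 eq_sym alpha_fp => h.
  lia.
have clQ : forall x, x \in Q -> alpha x \in Q.
  move=> x; rewrite !inE !negb_or => /andP[/andP[xd xad] xP].
  rewrite cl // andbT; apply/andP; split.
    by apply: contra xad => /eqP <-; rewrite alphaK.
  by rewrite (inj_eq alpha_inj).
have := IH #|Q| _ Q erefl clQ.
have -> : odd #|P| = odd #|Q| by rewrite cQ oddD addbF.
move=> -> //.
by rewrite -hn cQ; lia.
Qed.

Lemma sum_count (p : pred D) (ds : seq D) :
  \sum_d (count_mem d ds)%:R * (p d)%:R = (count p ds)%:R :> F2.
Proof.
elim: ds => [|a ds IH] /=.
  by rewrite big1 // => d _; rewrite mul0r.
under eq_bigr => d _ do rewrite natrD mulrDl.
rewrite big_split /= IH sum_deltaL natrD //.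
Qed.

Lemma pairing_split (X : pred D) :
  (forall d, X (alpha d) = X d) ->
  (forall P : {set D}, (forall d, d \in P -> ph d \in P) -> ~~ odd #|[set d in P | X d]|) ->
  forall a' b' : 'rV[F2]_#|D|, (a' <= kermx PhiM)%MS -> (b' <= kermx TalM)%MS ->
  \sum_d vf (a' + b') d * (X d)%:R = 0.
Proof.
move=> Xa Xf a' b' /kerPhiP ha /kerTalP hb.
under eq_bigr => d _ do rewrite vfD mulrDl.
rewrite big_split !sum_F2_card.
have -> : [set t | vf a' t * (X t)%:R != 0] = [set t in [set d | vf a' d != 0] | X t].
  by apply/setP => t; rewrite !inE; case: (X t); rewrite ?mulr1 ?mulr0 ?eqxx ?andbT ?andbF.
have /eqP -> : ((#|[set t in [set d | vf a' d != 0] | X t]|)%:R == 0 :> F2).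
  rewrite F2_oddE; apply: Xf => d; rewrite !inE ha //.
change (0 + (#|[set t | vf b' t * (X t)%:R != 0]|)%:R = 0 :> F2); rewrite add0r;
apply/eqP; rewrite F2_oddE; apply: even_alpha => d.
by rewrite !inE hb Xa.
Qed.

Lemma pairing_zero (X : pred D) :
  (forall d, X (alpha d) = X d) ->
  (forall P : {set D}, (forall d, d \in P -> ph d \in P) -> ~~ odd #|[set d in P | X d]|) ->
  forall w, (w <= kermx PhiM + kermx TalM)%MS -> \sum_d vf w d * (X d)%:R = 0.
Proof.
move=> Xa Xf w /sub_addsmxP[[a b] ->].
by apply: pairing_split => //; apply: submxMl.
Qed.

Fixpoint dpath (s : V) (ds : seq D) (t : V) : bool :=
  if ds is d :: ds' then (tl d == s) && dpath (tl (alpha d)) ds' t else s == t.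

Lemma dpath_cat s ds1 t ds2 u : dpath s ds1 t -> dpath t ds2 u -> dpath s (ds1 ++ ds2) u.
Proof.
elim: ds1 s => [|d ds1 IH] s /=; first by move=> /eqP ->.
by case/andP=> -> /IH h /h.
Qed.

Lemma dpath_count s ds t x : dpath s ds t ->
  (count (fun d => tl d == x) ds + (t == x) = count (fun d => tl (alpha d) == x) ds + (s == x))%N.
Proof.
elim: ds s => [|d ds IH] s /=; first by move=> /eqP ->; rewrite addnC.
case/andP=> /eqP <- /IH h; lia.
Qed.

Lemma walk_Z ds s : dpath s ds s -> (rv (fun d => (count_mem d ds)%:R : F2) <= kermx MM)%MS.
Proof.
move=> hp; apply/sub_kermxP/rv_eq0 => x; rewrite vmulE.
under eq_bigr => d _ do rewrite rvE' mulrDr.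
rewrite big_split /= (sum_count (fun d => tl d == x)) (sum_count (fun d => tl (alpha d) == x)).
have E : count (fun d => tl d == x) ds = count (fun d => tl (alpha d) == x) ds.
  by have := dpath_count x hp; lia.
rewrite E; exact: F2_add_self.
Qed.

Lemma dpath_parity (K : {set V}) s ds t : dpath s ds t ->
  odd (count (fun d => (tl d \in K) (+) (tl (alpha d) \in K)) ds) = (s \in K) (+) (t \in K).
Proof.
elim: ds s => [|d ds IH] s /=; first by move=> /eqP ->; rewrite addbb.
case/andP=> /eqP <- /IH IHd; rewrite [count _ _]/= oddD IHd oddb.
by case: (tl d \in K); case: (tl (alpha d) \in K); case: (t \in K).
Qed.

Lemma adj_sym : symmetric (adj tl alpha).
Proof.
move=> x y; apply/existsP/existsP => [][d /andP[/eqP<- /eqP<-]]; exists (alpha d);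
  by rewrite alphaK !eqxx.
Qed.

Lemma induced_sym (C : {set V}) : connect_sym (induced_rel (adj tl alpha) C).
Proof.
apply: sym_connect_sym => x y; rewrite /induced_rel adj_sym.
by case: (x \in C); case: (y \in C).
Qed.

Lemma connect_dpath (C : {set V}) s t : connect (induced_rel (adj tl alpha) C) s t ->
  exists ds, dpath s ds t && all (fun d => (tl d \in C) && (tl (alpha d) \in C)) ds.
Proof.
move=> /connectP[p]; elim: p s => [|y p IH] s /=.
  by move=> _ ->; exists [::]; rewrite /= eqxx.
case/andP=> /and3P[sC yC /existsP[d /andP[/eqP ds /eqP dy]]] /IH h /h [ds' /andP[h1 h2]].
exists (d :: ds') => /=; rewrite ds eqxx dy h1 h2 sC yC //.
Qed.

Lemma conn_in (C : {set V}) x y : connect (induced_rel (adj tl alpha) C) x y ->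
  x \in C -> y \in C.
Proof.
move=> /connectP[p]; elim: p x => [|z p IH] x /=; first by move=> _ ->.
by case/andP=> /and3P[_ zC _] /IH h /h h' _; apply: h'.
Qed.

Lemma card_split (P : {set D}) (Q R : pred D) :
  #|[set d in P | Q d]| = (#|[set d in P | Q d && R d]| + #|[set d in P | Q d && ~~ R d]|)%N.
Proof.
rewrite -(cardsID [set d | R d] [set d in P | Q d]); congr (_ + _)%N;
  apply: eq_card => d; rewrite !inE; by case: (d \in P); case: (Q d); case: (R d).
Qed.

Lemma card_shift (P : {set D}) (f : pred D) : (forall d, d \in P -> ph d \in P) ->
  #|[set d in P | f (ph d)]| = #|[set d in P | f d]|.
Proof.
move=> cl.
have eP : ph @: P = P.
  apply/eqP; rewrite eqEcard card_imset ?leqnn ?andbT; last exact: phi_inj.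
  by apply/subsetP => e /imsetP[d dP ->]; apply: cl.
have -> : [set d in P | f d] = ph @: [set d in P | f (ph d)].
  apply/setP => e; rewrite inE; apply/andP/imsetP.
    case=> eP' fe; move: eP'; rewrite -{1}eP => /imsetP[d dP ed].
    by exists d => //; rewrite inE dP -ed fe.
  by case=> d; rewrite inE => /andP[dP fd] ->; split => //; apply: cl.
by rewrite card_imset //; apply: phi_inj.
Qed.

Lemma even_xor (P : {set D}) (f : pred D) : (forall d, d \in P -> ph d \in P) ->
  ~~ odd #|[set d in P | f d (+) f (ph d)]|.
Proof.
move=> cl.
have e1 := card_split P f (fun d => f (ph d)).
have e2 := card_split P (fun d => f (ph d)) f.
have e3 := card_shift f cl.
have e4 := card_split P (fun d => f d (+) f (ph d)) f.
have e5 : #|[set d in P | f (ph d) && f d]| = #|[set d in P | f d && f (ph d)]|.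
  by apply: eq_card => d; rewrite !inE; case: (d \in P); case: (f d); case: (f (ph d)).
have e6 : #|[set d in P | (f d (+) f (ph d)) && f d]| = #|[set d in P | f d && ~~ f (ph d)]|.
  by apply: eq_card => d; rewrite !inE; case: (d \in P); case: (f d); case: (f (ph d)).
have e7 : #|[set d in P | (f d (+) f (ph d)) && ~~ f d]| = #|[set d in P | f (ph d) && ~~ f d]|.
  by apply: eq_card => d; rewrite !inE; case: (d \in P); case: (f d); case: (f (ph d)).
rewrite e4 e6 e7 oddD.
have : #|[set d in P | f d && ~~ f (ph d)]| = #|[set d in P | f (ph d) && ~~ f d]| by lia.
by move=> ->; rewrite addbb.
Qed.

Lemma core
  (Heul : (2 * (#|used_vertices tl| + fcard ph (mem D)) = #|D| + 4 * n_comp (map_rel alpha rot) (mem D))%N)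
  (A B : {set V}) (s t : V)
  (hface : forall e e', fconnect ph e e' -> tl e \in A -> tl e' \in B -> False)
  (sA : s \notin A) (sB : s \notin B)
  (cA : connect (induced_rel (adj tl alpha) (~: A)) s t)
  (cB : connect (induced_rel (adj tl alpha) (~: B)) s t) :
  connect (induced_rel (adj tl alpha) (~: (A :|: B))) s t.
Proof.
case: (boolP (connect _ s t)) => // nc; exfalso.
pose C := ~: (A :|: B).
pose K := [set v | connect (induced_rel (adj tl alpha) C) s v].
have sC : s \in C by rewrite !inE negb_or sA sB.
have K1 : forall v, v \in K -> v \in C.
  by move=> v; rewrite inE => h; exact: conn_in h sC.
have K2 : forall u w, u \in K -> adj tl alpha u w -> w \notin A -> w \notin B -> w \in K.
  move=> u w uK uw wA wB; rewrite inE.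
  apply: (connect_trans (_ : connect _ s u)); first by rewrite inE in uK.
  by apply: connect1; rewrite /induced_rel K1 // !inE negb_or wA wB uw.
have tK : t \notin K by rewrite inE.
have sK : s \in K by rewrite inE connect0.
have KA : forall v, v \in K -> v \notin A.
  by move=> v /K1; rewrite !inE negb_or => /andP[].
pose X := fun d => ((tl d \in K) && (tl (alpha d) \in A)) || ((tl d \in A) && (tl (alpha d) \in K)).
have Xa : forall d, X (alpha d) = X d.
  by move=> d; rewrite /X alphaK; case: (tl d \in K); case: (tl d \in A);
    case: (tl (alpha d) \in K); case: (tl (alpha d) \in A).
have adj1 : forall d, adj tl alpha (tl d) (tl (alpha d)).
  by move=> d; apply/existsP; exists d; rewrite !eqxx.
have adj2 : forall d, adj tl alpha (tl (alpha d)) (tl d).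
  by move=> d; apply/existsP; exists (alpha d); rewrite alphaK !eqxx.
have Xxor : forall d, tl d \notin B -> tl (alpha d) \notin B ->
    X d = (tl d \in K) (+) (tl (alpha d) \in K).
  move=> d hB1 hB2; rewrite /X.
  case h1: (tl d \in K); case h2: (tl (alpha d) \in K) => /=.
  - by rewrite (negbTE (KA _ h1)) (negbTE (KA _ h2)).
  - rewrite andbF orbF; apply/negPn/negP => hA.
    by have := K2 _ _ h1 (adj1 d) hA hB2; rewrite h2.
  - rewrite andbT; apply/negPn/negP => hA.
    by have := K2 _ _ h2 (adj2 d) hA hB1; rewrite h1.
  - by rewrite andbF.
have Xf : forall P : {set D}, (forall d, d \in P -> ph d \in P) -> ~~ odd #|[set d in P | X d]|.
  move=> P cl.
  pose Pa := [set d in P | [exists e, fconnect ph d e && (tl e \in A)]].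
  have clA : forall d, d \in Pa -> ph d \in Pa.
    move=> d; rewrite !inE => /andP[dP /existsP[e /andP[de eA]]].
    rewrite cl //=; apply/existsP; exists e.
    by rewrite eA andbT -(same_fconnect1 phi_inj).
  have noB : forall d, d \in Pa -> (tl d \notin B) && (tl (alpha d) \notin B).
    move=> d; rewrite !inE => /andP[dP /existsP[e /andP[de eA]]].
    apply/andP; split; apply/negP => hB.
      by apply: (hface e d) => //; rewrite fconnect_sym //; exact: phi_inj.
    apply: (hface e (ph d)) => //; last by rewrite tl_phi.
    by rewrite fconnect_sym; [rewrite -(same_fconnect1 phi_inj) | exact: phi_inj].
  have -> : #|[set d in P | X d]| = #|[set d in Pa | (tl d \in K) (+) (tl (ph d) \in K)]|.
    apply: eq_card => d; rewrite [in LHS]inE [in RHS]inE.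
    case dPa: (d \in Pa).
      case/andP: (noB d dPa) => h1 h2; rewrite Xxor // tl_phi.
      by move: dPa; rewrite inE => /andP[->].
    move: dPa; rewrite inE; case dP: (d \in P) => //= /negbT /existsPn hn.
    apply/negbTE/negP => Xd.
    move: Xd; rewrite /X => /orP[/andP[_ hA]|/andP[hA _]].
      by have := hn (ph d); rewrite fconnect1 tl_phi hA.
    by have := hn d; rewrite connect0 hA.
  exact: (even_xor (fun v => tl v \in K) clA).
have [ds1 /andP[p1 a1]] := connect_dpath cA.
have cB' : connect (induced_rel (adj tl alpha) (~: B)) t s by rewrite induced_sym.
have [ds2 /andP[p2 a2]] := connect_dpath cB'.
have pc := dpath_cat p1 p2.
have wB := submx_trans (walk_Z pc) (Z_sub Heul).
have := pairing_zero Xa Xf wB.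
under eq_bigr => d _ do rewrite rvE.
rewrite sum_count count_cat.
have c1 : count X ds1 = 0%N.
  apply/eqP; rewrite eqn0Ngt -has_count; apply/hasPn => d /(allP a1) /andP[h1 h2].
  by rewrite !inE in h1 h2; rewrite /X (negbTE h1) (negbTE h2) !andbF.
have c2 : odd (count X ds2).
  rewrite (@eq_in_count _ _ (fun d => (tl d \in K) (+) (tl (alpha d) \in K))).
    by rewrite (dpath_parity K p2) (negbTE tK) sK.
  move=> d /(allP a2) /andP[h1 h2]; rewrite !inE in h1 h2; exact: Xxor.
by move/eqP; rewrite F2_oddE c1 add0n c2.
Qed.

End Graph.

Lemma sep_dec (V D : finType) (tl : D -> V) (alpha : D -> D) (m : nat)
  (sigma : V -> {set 'I_m}) s t S :
  ~ color_separator tl alpha sigma s t S ->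
  [/\ s \notin VC sigma S, t \notin VC sigma S &
      connect (induced_rel (adj tl alpha) (~: VC sigma S)) s t].
Proof.
move=> H.
have h1 : s \notin VC sigma S.
  by apply/negP => h; apply: H => -[a _]; rewrite h in a.
have h2 : t \notin VC sigma S.
  by apply/negP => h; apply: H => -[_ [a _]]; rewrite h in a.
have h3 : connect (induced_rel (adj tl alpha) (~: VC sigma S)) s t.
  by apply/negPn/negP => h; apply: H => -[_ [_ a]]; rewrite a in h.
by split.
Qed.

Local Close Scope ring_scope.

Theorem lemma4p6 (V D : finType) (tl : D -> V) (alpha rot : D -> D)
  (m : nat) (sigma : V -> {set 'I_m}) (s t : V) (S : {set 'I_m}) :
  plane_map tl alpha rot ->
  color_connected tl alpha sigma ->
  connect (adj tl alpha) s t ->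
  minimal_color_separator tl alpha sigma s t S ->
  induced_connected (cig_adj tl alpha rot sigma) S.
Proof.
move=> [aK [afp [rinj [trot [_ [_ [_ Heul]]]]]]] _ _ [sepS minS] x y xS yS.
case: (boolP (connect _ x y)) => // nc; exfalso.
pose cig := induced_rel (cig_adj tl alpha rot sigma) S.
pose S1 := [set z in S | connect cig x z].
pose S2 := S :\: S1.
have xS1 : x \in S1 by rewrite inE xS connect0.
have yS1 : y \notin S1 by rewrite inE yS.
have p1 : S1 \proper S.
  apply/properP; split; first by apply/subsetP => z; rewrite inE => /andP[].
  by exists y.
have p2 : S2 \proper S.
  apply/properP; split; first by apply/subsetP => z; rewrite inE => /andP[].
  by exists x => //; rewrite inE xS1.
have [sA tA cA] := sep_dec (minS _ p1).
have [sB tB cB] := sep_dec (minS _ p2).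
have eVC : VC sigma S = VC sigma S1 :|: VC sigma S2.
  apply/setP => v; rewrite !inE; apply/idP/idP.
    case/pred0Pn => i /andP[/= iv iS].
    case: (boolP (i \in S1)) => h; apply/orP; [left|right]; apply/pred0Pn; exists i.
      by rewrite /= iv h.
    by rewrite /= iv inE h iS.
  case/orP => /pred0Pn[i /andP[/= iv]]; rewrite inE => /andP[h1 h2];
    apply/pred0Pn; exists i; rewrite /= iv //.
apply: sepS; rewrite eVC !in_setU !negb_or sA tA sB tB; split => //; split => //.
apply: (core aK afp rinj trot Heul) => //.
move=> e e' ee'; rewrite !inE => /pred0Pn[i /andP[/= i1 i2]] /pred0Pn[j /andP[/= j1 j2]].
have iF : i \in face_colors tl alpha rot sigma e.
  by apply/bigcupP; exists e => //; rewrite inE i1.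
have jF : j \in face_colors tl alpha rot sigma e.
  by apply/bigcupP; exists e' => //; rewrite inE j1.
move: j2; rewrite inE => /andP[jS1 jS].
move: i2; rewrite inE => /andP[iS ci].
have ij : i != j by apply: contraNneq jS1 => <-; rewrite inE iS.
apply/negP: jS1; apply/negPn.
rewrite inE jS /=; apply: connect_trans ci (connect1 _).
rewrite /cig /induced_rel iS jS /= /cig_adj.
by rewrite ij; apply/existsP; exists e; rewrite iF jF.
Qed.
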